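(* Assume (C1) and (C2). For any $u\in\mathcal{D}$ with $u\neq0$, there exists a unique constant $t_0>0$ such that $t_0u\in\mathcal{N}$.
   Context: Fix real numbers $p,q,r$ with $1<p<q$, $\frac p2$ a positive integer, and $r\ge1$, and functions $a,b,c:\mathbb{Z}\to(0,+\infty)$. Conditions: - (C1) There is $b_0>0$ with $b(n)\ge b_0$ for all $n$ and $b(n)\to+\infty$ as $|n|\to\infty$. - (C2) There is $c_0>0$ with $c(n)\le c_0$ for all $n$ and $\sum_n c(n)<+\infty$. Notation and spaces: - $\Delta u(n)=u(n+1)-u(n)$. - $E$ is the set of real sequences $u$ with $\|u\|:=\big(\sum_n[a(n)|\Delta u(n)|^p+b(n)|u(n)|^p]\big)^{1/p}<\infty$. - $\mathcal{D}=\{u\in E:\sum_n c(n)|u(n)|^q\ln|u(n)|^r<+\infty\}$, where terms with $u(n)=0$ are read as $0$. For $u,v\in\mathcal{D}$: $$\langle I'(u),v\rangle=\sum_n[a(n)|\Delta u(n)|^{p-2}\Delta u(n)\Delta v(n)+b(n)|u(n)|^{p-2}u(n)v(n)]-\sum_n c(n)|u(n)|^{q-2}u(n)v(n)\ln|u(n)|^r.$$ $\mathcal{N}=\{u\in\mathcal{D}:u\ne0,\ \langle I'(u),u\rangle=0\}$. *)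

(* Defs.v *)
From Stdlib Require Import Reals ZArith.
From Coquelicot Require Import Coquelicot.
Open Scope R_scope.

(* |x|^s for real exponent s >= 0, with the convention |0|^s = 0
   (Stdlib's Rpower 0 s = 1, so we guard the zero case). *)
Definition apow (x s : R) : R :=
  if Req_EM_T x 0 then 0 else Rpower (Rabs x) s.

Definition summableZ (f : Z -> R) : Prop :=
  ex_series (fun n : nat => Rabs (f (Z.of_nat n))) /\
  ex_series (fun n : nat => Rabs (f (- Z.of_nat (S n))%Z)).

Definition sumZ (f : Z -> R) : R :=
  Series (fun n : nat => f (Z.of_nat n)) +
  Series (fun n : nat => f (- Z.of_nat (S n))%Z).

Definition Delta (u : Z -> R) (n : Z) : R := u (n + 1)%Z - u n.

Definition scaleZ (t : R) (u : Z -> R) : Z -> R := fun n => t * u n.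

Definition inE (p : R) (a b : Z -> R) (u : Z -> R) : Prop :=
  summableZ (fun n => a n * apow (Delta u n) p + b n * apow (u n) p).

Definition logterm (q r : R) (c : Z -> R) (u : Z -> R) (n : Z) : R :=
  if Req_EM_T (u n) 0 then 0
  else c n * apow (u n) q * ln (Rpower (Rabs (u n)) r).

Definition inD (p q r : R) (a b c : Z -> R) (u : Z -> R) : Prop :=
  inE p a b u /\ summableZ (logterm q r c u).

Definition dI (p q r : R) (a b c : Z -> R) (u v : Z -> R) : R :=
  sumZ (fun n => a n * apow (Delta u n) (p - 2) * Delta u n * Delta v n
               + b n * apow (u n) (p - 2) * u n * v n)
  - sumZ (fun n => if Req_EM_T (u n) 0 then 0 else
            c n * apow (u n) (q - 2) * u n * v n * ln (Rpower (Rabs (u n)) r)).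

Definition inN (p q r : R) (a b c : Z -> R) (u : Z -> R) : Prop :=
  inD p q r a b c u /\ (exists n, u n <> 0) /\ dI p q r a b c u u = 0.

Definition condC1 (b : Z -> R) : Prop :=
  (exists b0, 0 < b0 /\ forall n, b0 <= b n) /\
  (forall M, exists N : Z, forall n, (N < Z.abs n)%Z -> M < b n).

Definition condC2 (c : Z -> R) : Prop :=
  (exists c0, 0 < c0 /\ forall n, c n <= c0) /\ summableZ c.

(* Main.v *)
Require Import Defs.
From Stdlib Require Import Reals ZArith.
From Coquelicot Require Import Coquelicot.
From Stdlib Require Import Lra Lia.
Open Scope R_scope.

Lemma summableZ_ext (f g : Z -> R) : (forall n, f n = g n) -> summableZ f -> summableZ g.
Proof.
  intros H [H1 H2]; split.
  - eapply ex_series_ext; [| exact H1]; intros; simpl; rewrite H; reflexivity.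
  - eapply ex_series_ext; [| exact H2]; intros; simpl; rewrite H; reflexivity.
Qed.

Lemma sumZ_ext (f g : Z -> R) : (forall n, f n = g n) -> sumZ f = sumZ g.
Proof.
  intros H; unfold sumZ; f_equal; apply Series_ext; intros; apply H.
Qed.

Lemma summableZ_scal (k : R) (f : Z -> R) : summableZ f -> summableZ (fun n => k * f n).
Proof.
  intros [H1 H2]; split.
  - eapply ex_series_ext; [| apply (ex_series_scal_l (Rabs k)); exact H1].
    intros; simpl. rewrite Rabs_mult; reflexivity.
  - eapply ex_series_ext; [| apply (ex_series_scal_l (Rabs k)); exact H2].
    intros; simpl. rewrite Rabs_mult; reflexivity.
Qed.

Lemma summableZ_plus (f g : Z -> R) : summableZ f -> summableZ g -> summableZ (fun n => f n + g n).
Proof.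
  intros [H1 H2] [G1 G2]; split.
  - apply (@ex_series_le R_AbsRing R_CompleteNormedModule _ (fun n => Rabs (f (Z.of_nat n)) + Rabs (g (Z.of_nat n)))).
    + intros n; unfold norm; simpl; unfold abs; simpl. rewrite Rabs_Rabsolu. apply Rabs_triang.
    + apply (ex_series_plus _ _ H1 G1).
  - apply (@ex_series_le R_AbsRing R_CompleteNormedModule _ (fun n => Rabs (f (- Z.of_nat (S n))%Z) + Rabs (g (- Z.of_nat (S n))%Z))).
    + intros n; unfold norm; simpl; unfold abs; simpl. rewrite Rabs_Rabsolu. apply Rabs_triang.
    + apply (ex_series_plus _ _ H2 G2).
Qed.

Lemma sumZ_scal (k : R) (f : Z -> R) : sumZ (fun n => k * f n) = k * sumZ f.
Proof.
  unfold sumZ; rewrite !Series_scal_l; ring.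
Qed.

Lemma sumZ_plus (f g : Z -> R) : summableZ f -> summableZ g ->
  sumZ (fun n => f n + g n) = sumZ f + sumZ g.
Proof.
  intros [H1 H2] [G1 G2]; unfold sumZ.
  rewrite (Series_plus (fun n => f (Z.of_nat n)) (fun n => g (Z.of_nat n))).
  2,3: apply ex_series_Rabs; assumption.
  rewrite (Series_plus (fun n => f (- Z.of_nat (S n))%Z) (fun n => g (- Z.of_nat (S n))%Z)).
  2,3: apply ex_series_Rabs; assumption.
  ring.
Qed.

Lemma Series_zero_le (b : nat -> R) : (forall k, 0 <= b k) -> ex_series b -> 0 <= Series b.
Proof.
  intros Hb He.
  assert (E : Series (fun n => 0 * b n) = 0) by (rewrite Series_scal_l; ring).
  rewrite <- E. apply Series_le; auto. intros n; split; [lra|]. rewrite Rmult_0_l; auto.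
Qed.

Lemma series_term_le (a : nat -> R) (m : nat) : (forall k, 0 <= a k) -> ex_series a -> a m <= Series a.
Proof.
  intros Ha He.
  rewrite (Series_incr_n a (S m)); [| lia | exact He].
  simpl Nat.pred.
  assert (0 <= Series (fun k => a (S m + k)%nat)).
  { apply Series_zero_le; auto. apply (proj1 (ex_series_incr_n a (S m))); exact He. }
  destruct m as [|m].
  - simpl sum_f_R0. simpl plus in *. lra.
  - simpl sum_f_R0. simpl plus in *. assert (0 <= sum_f_R0 a m) by (apply cond_pos_sum; auto). lra.
Qed.

Lemma Z_split (n : Z) : exists m : nat, n = Z.of_nat m \/ n = (- Z.of_nat (S m))%Z.
Proof.
  destruct (Z_le_gt_dec 0 n).
  - exists (Z.to_nat n); left; lia.
  - exists (Z.to_nat (- n - 1)); right; lia.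
Qed.

Lemma sumZ_term_le (f : Z -> R) (n : Z) : (forall k, 0 <= f k) -> summableZ f -> f n <= sumZ f.
Proof.
  intros Hf [H1 H2].
  assert (E1 : ex_series (fun k : nat => f (Z.of_nat k))) by (apply ex_series_Rabs; auto).
  assert (E2 : ex_series (fun k : nat => f (- Z.of_nat (S k))%Z)) by (apply ex_series_Rabs; auto).
  unfold sumZ.
  destruct (Z_split n) as [m [-> | ->]].
  - pose proof (series_term_le (fun k => f (Z.of_nat k)) m (fun k => Hf _) E1).
    pose proof (Series_zero_le _ (fun k => Hf _) E2). simpl in *. lra.
  - pose proof (series_term_le (fun k => f (- Z.of_nat (S k))%Z) m (fun k => Hf _) E2).
    pose proof (Series_zero_le _ (fun k => Hf _) E1). simpl in *. lra.
Qed.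

Lemma apow_zero (s : R) : apow 0 s = 0.
Proof. unfold apow; destruct (Req_EM_T 0 0); [reflexivity | contradiction]. Qed.

Lemma apow_nz (x s : R) : x <> 0 -> apow x s = Rpower (Rabs x) s.
Proof. intros H; unfold apow; destruct (Req_EM_T x 0); [contradiction | reflexivity]. Qed.

Lemma apow_nonneg (x s : R) : 0 <= apow x s.
Proof.
  unfold apow; destruct (Req_EM_T x 0); [lra|]. unfold Rpower; left; apply exp_pos.
Qed.

Lemma apow_scale (t x s : R) : 0 < t -> apow (t * x) s = Rpower t s * apow x s.
Proof.
  intros Ht. destruct (Req_dec x 0) as [->|Hx].
  - rewrite Rmult_0_r, apow_zero; ring.
  - rewrite !apow_nz; auto.
    + rewrite Rabs_mult, (Rabs_pos_eq t) by lra.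
      rewrite Rpower_mult_distr; auto. apply Rabs_pos_lt; auto.
    + apply Rmult_integral_contrapositive; split; lra.
Qed.

Lemma apow_sq (x s : R) : apow x (s - 2) * x * x = apow x s.
Proof.
  destruct (Req_dec x 0) as [->|Hx].
  - rewrite !apow_zero; ring.
  - rewrite !apow_nz; auto.
    assert (H2 : Rpower (Rabs x) 2 = x * x).
    { replace 2 with (INR 2) by (simpl; ring). rewrite Rpower_pow by (apply Rabs_pos_lt; auto).
      rewrite pow2_abs. ring. }
    rewrite Rmult_assoc, <- H2, <- Rpower_plus. f_equal; ring.
Qed.

Lemma ln_Rpower (y r : R) : ln (Rpower y r) = r * ln y.
Proof. unfold Rpower; rewrite ln_exp; reflexivity. Qed.

Lemma Delta_scale (t : R) (u : Z -> R) (n : Z) : Defs.Delta (scaleZ t u) n = t * Defs.Delta u n.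
Proof. unfold Defs.Delta, scaleZ; ring. Qed.

Lemma logterm_scale (q r t : R) (c u : Z -> R) (n : Z) : 0 < t ->
  logterm q r c (scaleZ t u) n = Rpower t q * (r * ln t * (c n * apow (u n) q) + logterm q r c u n).
Proof.
  intros Ht. unfold logterm, scaleZ.
  destruct (Req_EM_T (t * u n) 0) as [E1|E1]; destruct (Req_EM_T (u n) 0) as [E2|E2].
  - rewrite E2, apow_zero; ring.
  - exfalso. apply Rmult_integral in E1. destruct E1; [lra | contradiction].
  - exfalso. apply E1. rewrite E2; ring.
  - rewrite apow_scale by auto.
    rewrite !ln_Rpower, Rabs_mult, (Rabs_pos_eq t) by lra.
    rewrite ln_mult; [ring | auto | apply Rabs_pos_lt; auto].
Qed.

Lemma T2 (q r : R) (c w : Z -> R) (n : Z) :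
  (if Req_EM_T (w n) 0 then 0 else
     c n * apow (w n) (q - 2) * w n * w n * ln (Rpower (Rabs (w n)) r))
  = logterm q r c w n.
Proof.
  unfold logterm. destruct (Req_EM_T (w n) 0); [reflexivity|].
  rewrite <- (apow_sq (w n) q). ring.
Qed.

Lemma h_inj (d C L A s s' : R) : 0 < d -> 0 < C -> 0 < A ->
  exp (d * s) * (C * s + L) = A -> exp (d * s') * (C * s' + L) = A -> s = s'.
Proof.
  intros Hd HC HA E1 E2.
  assert (P1 := exp_pos (d * s)). assert (P2 := exp_pos (d * s')).
  assert (X1 : 0 < C * s + L).
  { destruct (Rle_lt_dec (C * s + L) 0); auto. exfalso; nra. }
  assert (X2 : 0 < C * s' + L).
  { destruct (Rle_lt_dec (C * s' + L) 0); auto. exfalso; nra. }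
  destruct (Rtotal_order s s') as [H|[H|H]]; auto; exfalso.
  - assert (exp (d * s) < exp (d * s')) by (apply exp_increasing; nra).
    assert (C * s + L < C * s' + L) by nra. nra.
  - assert (exp (d * s') < exp (d * s)) by (apply exp_increasing; nra).
    assert (C * s' + L < C * s + L) by nra. nra.
Qed.

Lemma key (p q A C L : R) : p < q -> 0 < A -> 0 < C ->
  exists! t, 0 < t /\ Rpower t p * A - Rpower t q * (ln t * C + L) = 0.
Proof.
  intros Hpq HA HC.
  set (d := q - p).
  assert (Hd : 0 < d) by (unfold d; lra).
  assert (E : forall t, Rpower t p * A - Rpower t q * (ln t * C + L)
             = exp (p * ln t) * (A - exp (d * ln t) * (C * ln t + L))).
  { intros t. unfold Rpower. replace (q * ln t) with (p * ln t + d * ln t) by (unfold d; ring).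
    rewrite exp_plus; ring. }
  set (f := fun s => exp (d * s) * (C * s + L) - A).
  set (x := - L / C).
  set (y := Rmax 0 x + 1 + A / C).
  assert (Hcont : continuity f) by (unfold f; apply derivable_continuous; reg).
  assert (HAC : 0 < A / C) by (apply Rdiv_lt_0_compat; auto).
  assert (Hm0 := Rmax_l 0 x). assert (Hmx := Rmax_r 0 x).
  assert (Hxy : x < y) by (unfold y; lra).
  assert (Hfx : f x < 0).
  { unfold f. replace (C * x + L) with 0 by (unfold x; field; lra). lra. }
  assert (Hfy : 0 < f y).
  { unfold f.
    assert (HCy : C * y + L >= C + A).
    { unfold y. replace (C * (Rmax 0 x + 1 + A / C)) with (C * Rmax 0 x + C + A) by (field; lra).
      assert (C * x = - L) by (unfold x; field; lra). nra. }
    assert (Hey : 1 <= exp (d * y)).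
    { rewrite <- exp_0. destruct (Req_dec (d * y) 0) as [Z|Z].
      - rewrite Z; lra.
      - left; apply exp_increasing. assert (0 <= y) by (unfold y; lra). nra. }
    nra. }
  destruct (IVT f x y Hcont Hxy Hfx Hfy) as [z [_ Hz]].
  exists (exp z). split.
  - split; [apply exp_pos|]. rewrite E, ln_exp. unfold f in Hz.
    replace (A - exp (d * z) * (C * z + L)) with 0 by lra. ring.
  - intros t' [Ht' H']. rewrite E in H'.
    apply Rmult_integral in H'. destruct H' as [H'|H'].
    + exfalso; pose proof (exp_pos (p * ln t')); lra.
    + rewrite <- (exp_ln t') by auto. f_equal.
      apply (h_inj d C L A); auto.
      unfold f in Hz; lra. lra.
Qed.

Theorem lemma2p6 (p q r : R) (a b c : Z -> R)
  (hp1 : 1 < p) (hpq : p < q) (hp2 : exists k : nat, (1 <= k)%nat /\ p = 2 * INR k)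
  (hr : 1 <= r)
  (ha : forall n, 0 < a n) (hb : forall n, 0 < b n) (hc : forall n, 0 < c n)
  (hC1 : condC1 b) (hC2 : condC2 c)
  (u : Z -> R) (hu : inD p q r a b c u) (hu0 : exists n, u n <> 0) :
  exists! t0 : R, 0 < t0 /\ inN p q r a b c (scaleZ t0 u).
Proof.
  destruct hu as [hE hL].
  destruct hu0 as [n0 hn0].
  destruct hC1 as [[b0 [hb0 hb0']] _].
  destruct hC2 as [_ hcs].
  set (f1 := fun n => a n * apow (Defs.Delta u n) p + b n * apow (u n) p).
  set (f2 := fun n => c n * apow (u n) q).
  set (lt := logterm q r c u).
  assert (hf1 : summableZ f1) by exact hE.
  assert (f1nn : forall n, 0 <= f1 n).
  { intros n; unfold f1. pose proof (apow_nonneg (Defs.Delta u n) p). pose proof (apow_nonneg (u n) p).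
    pose proof (ha n); pose proof (hb n). nra. }
  set (A := sumZ f1).
  assert (hA : 0 < A).
  { apply Rlt_le_trans with (f1 n0); [| apply sumZ_term_le; auto].
    unfold f1. rewrite (apow_nz (u n0)) by auto.
    pose proof (apow_nonneg (Defs.Delta u n0) p). pose proof (ha n0); pose proof (hb n0).
    assert (0 < Rpower (Rabs (u n0)) p) by (unfold Rpower; apply exp_pos). nra. }
  set (B := 1 + A / b0).
  assert (hB : forall n, Rabs (u n) <= B).
  { intros n. assert (HAb : 0 < A / b0) by (apply Rdiv_lt_0_compat; auto).
    destruct (Req_dec (u n) 0) as [E|E].
    - rewrite E, Rabs_R0; unfold B; lra.
    - destruct (Rle_lt_dec (Rabs (u n)) 1) as [H1|H1]; [unfold B; lra|].
      assert (Hfn := sumZ_term_le f1 n f1nn hf1). fold A in Hfn. unfold f1 in Hfn.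
      rewrite (apow_nz (u n)) in Hfn by auto.
      pose proof (apow_nonneg (Defs.Delta u n) p). pose proof (ha n); pose proof (hb0' n).
      assert (Hp1 : Rabs (u n) <= Rpower (Rabs (u n)) p).
      { rewrite <- (Rpower_1 (Rabs (u n))) at 1 by lra. apply Rle_Rpower; lra. }
      assert (b0 * Rpower (Rabs (u n)) p <= A) by nra.
      assert (Rpower (Rabs (u n)) p <= A / b0).
      { apply (Rmult_le_reg_l b0); auto. field_simplify; lra. }
      unfold B; lra. }
  assert (hf2 : summableZ f2).
  { apply summableZ_ext with (fun n => f2 n); [reflexivity|].
    assert (hbd : forall n, Rabs (f2 n) <= Rpower B q * Rabs (c n)).
    { intros n. unfold f2. rewrite Rabs_mult, (Rabs_pos_eq (apow _ _)) by apply apow_nonneg.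
      rewrite Rmult_comm. apply Rmult_le_compat_r; [apply Rabs_pos|].
      destruct (Req_dec (u n) 0) as [E|E].
      - rewrite E, apow_zero. unfold Rpower; left; apply exp_pos.
      - rewrite apow_nz by auto. apply Rle_Rpower_l; [lra|]. split; auto. apply Rabs_pos_lt; auto. }
    destruct hcs as [c1 c2]. split.
    - apply (@ex_series_le R_AbsRing R_CompleteNormedModule _ (fun n => Rpower B q * Rabs (c (Z.of_nat n)))).
      + intros n; unfold norm; simpl; unfold abs; simpl. rewrite Rabs_Rabsolu. apply hbd.
      + apply (ex_series_scal_l (Rpower B q) _ c1).
    - apply (@ex_series_le R_AbsRing R_CompleteNormedModule _ (fun n => Rpower B q * Rabs (c (- Z.of_nat (S n))%Z))).
      + intros n; unfold norm; simpl; unfold abs; simpl. rewrite Rabs_Rabsolu. apply hbd.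
      + apply (ex_series_scal_l (Rpower B q) _ c2). }
  set (C := sumZ f2).
  assert (hC : 0 < C).
  { apply Rlt_le_trans with (f2 n0).
    - unfold f2. rewrite (apow_nz (u n0)) by auto. pose proof (hc n0).
      assert (0 < Rpower (Rabs (u n0)) q) by (unfold Rpower; apply exp_pos). nra.
    - apply sumZ_term_le; auto. intros k; unfold f2. pose proof (hc k); pose proof (apow_nonneg (u k) q). nra. }
  set (L := sumZ lt).
  assert (hD : forall t, 0 < t -> inD p q r a b c (scaleZ t u)).
  { intros t Ht. split.
    - unfold inE. apply summableZ_ext with (fun n => Rpower t p * f1 n).
      + intros n. unfold f1. rewrite Delta_scale. unfold scaleZ. rewrite !apow_scale by auto. ring.
      + apply summableZ_scal; auto.
    - apply summableZ_ext with (fun n => Rpower t q * (r * ln t * f2 n + lt n)).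
      + intros n. rewrite logterm_scale by auto. reflexivity.
      + apply summableZ_scal, summableZ_plus; [apply summableZ_scal|]; auto. }
  assert (hdI : forall t, 0 < t -> dI p q r a b c (scaleZ t u) (scaleZ t u)
                 = Rpower t p * A - Rpower t q * (ln t * (r * C) + L)).
  { intros t Ht.
    transitivity (sumZ (fun n => Rpower t p * f1 n) - sumZ (fun n => Rpower t q * (r * ln t * f2 n + lt n))).
    { unfold dI. f_equal; apply sumZ_ext; intros n; cbv beta.
      - unfold f1. rewrite Delta_scale. unfold scaleZ.
        replace (a n * apow (t * Defs.Delta u n) (p - 2) * (t * Defs.Delta u n) * (t * Defs.Delta u n) +
                 b n * apow (t * u n) (p - 2) * (t * u n) * (t * u n))
          with (a n * (apow (t * Defs.Delta u n) (p - 2) * (t * Defs.Delta u n) * (t * Defs.Delta u n)) +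
                b n * (apow (t * u n) (p - 2) * (t * u n) * (t * u n))) by ring.
        rewrite !apow_sq, !apow_scale by auto. ring.
      - rewrite (T2 q r c (scaleZ t u) n). rewrite logterm_scale by auto. reflexivity. }
    rewrite !sumZ_scal, sumZ_plus, sumZ_scal; [| apply summableZ_scal; auto | exact hL].
    fold A C L. ring. }
  destruct (key p q A (r * C) L hpq hA) as [t0 [[Ht0 Heq] Huniq]].
  { apply Rmult_lt_0_compat; lra. }
  exists t0. split.
  - split; auto. split; [apply hD; auto|]. split.
    + exists n0. unfold scaleZ. apply Rmult_integral_contrapositive; split; lra.
    + rewrite hdI by auto. exact Heq.
  - intros t' [Ht' [_ [_ Hd]]]. apply Huniq. split; auto. rewrite hdI in Hd by auto. exact Hd.
Qed.
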